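(* Let $V$ be a vector space over $\mathbb{F}_2$ and let $\xi\in\mathbb{F}_2[V]$ be nonzero, with $d=|D(\xi)|$. (i) If $\xi\in I[V]$, then $d\geq 2$ and there are $1$-fold Pfister elements $\pi_1,\ldots,\pi_p$ with $\xi=\pi_1+\cdots+\pi_p$ and $p\leq d$; if moreover $0\in D(\xi)$, such a decomposition exists with $p\leq d-1$. (ii) If $\xi\in I[V]$ and $\varepsilon_1(\xi)=0$, then $d\geq 4$ and there are $2$-fold Pfister elements $\pi_1,\ldots,\pi_p$ with $\xi=\pi_1+\cdots+\pi_p$ and $p\leq d-2$; if moreover $0\in D(\xi)$, such a decomposition exists with $p\leq d-3$.
   Context: For an $\mathbb{F}_2$-vector space $V$, $\mathbb{F}_2[V]$ is the group algebra, whose elements are finite sums $\sum_{v\in V}\alpha_vX^v$ ($\alpha_v\in\mathbb{F}_2$), with $X^0=1$ and $X^uX^v=X^{u+v}$. Define group homomorphisms $\varepsilon_0:\mathbb{F}_2[V]\to\mathbb{F}_2$, $\varepsilon_0(\sum\alpha_vX^v)=\sum\alpha_v$ (augmentation), and $\varepsilon_1:\mathbb{F}_2[V]\to V$, $\varepsilon_1(\sum\alpha_vX^v)=\sum\alpha_v v$. $I[V]=\ker\varepsilon_0$. For $m\geq1$, an $m$-fold Pfister element is a product $(1+X^{v_1})\cdots(1+X^{v_m})$ with $v_1,\ldots,v_m\in V$ (so $0$ is an $m$-fold Pfister element). The support of $\xi=\sum\alpha_vX^v$ is $D(\xi)=\{v\in V\mid \alpha_v=1\}$. *)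

(* Defs.v *)
From HB Require Import structures.
From mathcomp Require Import all_boot all_order all_algebra.
From mathcomp Require Import finmap.
Set Implicit Arguments. Unset Strict Implicit. Unset Printing Implicit Defensive.
Import GRing.Theory.
Local Open Scope ring_scope.
Local Open Scope fset_scope.

(* An element  xi = \sum_v alpha_v X^v  of the group algebra F_2[V]
   (alpha_v in F_2, finitely many nonzero) is represented by the finite set
   of those v with alpha_v = 1, i.e. by its support D(xi); this is a
   bijection between F_2[V] and the finite subsets of V. *)
Definition grpalg (V : lmodType 'F_2) := {fset V}.

Section GroupAlgebra.
Variable V : lmodType 'F_2.

Definition coef (xi : grpalg V) (v : V) : 'F_2 := (v \in xi)%:R.

Definition supp (xi : grpalg V) : {fset V} := xi.

Definition ga0 : grpalg V := fset0.
Definition gaX (v : V) : grpalg V := [fset v].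
Definition ga1 : grpalg V := gaX 0.

(* addition: coefficientwise sum in F_2 = symmetric difference of supports *)
Definition gaadd (xi eta : grpalg V) : grpalg V :=
  (xi `\` eta) `|` (eta `\` xi).

(* multiplication: bilinear extension of X^u X^v = X^(u+v); the coefficient
   of X^w in xi*eta is the parity of #{(u,v) in D(xi) x D(eta) | u+v = w}
   = #{u in D(xi) | w - u in D(eta)}. *)
Definition gamul (xi eta : grpalg V) : grpalg V :=
  [fset w in [fset (u + v)%R | u in xi, v in eta]
     | odd #|` [fset u in xi | (w - u)%R \in eta]|].

Definition eps0 (xi : grpalg V) : 'F_2 := \sum_(v <- xi) (1 : 'F_2).
Definition eps1 (xi : grpalg V) : V := \sum_(v <- xi) v.

Definition in_I (xi : grpalg V) : Prop := eps0 xi = 0.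

Definition pf1 (v : V) : grpalg V := gaadd ga1 (gaX v).
Definition pf2 (u v : V) : grpalg V := gamul (pf1 u) (pf1 v).

Definition gasum (s : seq (grpalg V)) : grpalg V := foldr gaadd ga0 s.

End GroupAlgebra.

(* Main.v *)
Require Import Defs.
From HB Require Import structures.
From mathcomp Require Import all_boot all_order all_algebra.
From mathcomp Require Import finmap.
From mathcomp Require Import zify.
Local Open Scope fset_scope.
Import GRing.Theory.

Section Aux.
Local Open Scope ring_scope.
Variable V : lmodType 'F_2.

Lemma xorsum_odd (T : Type) (s : seq T) (P : pred T) :
  \big[addb/false]_(x <- s) P x = odd (count P s).
Proof.
elim: s => [|x s IH]; first by rewrite big_nil.
by rewrite big_cons IH /= oddD; case: (P x).
Qed.

Lemma xorsum_const (T : Type) (s : seq T) (b : bool) :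
  \big[addb/false]_(x <- s) b = odd (size s) && b.
Proof.
elim: s => [|x s IH]; first by rewrite big_nil.
rewrite big_cons IH /=. by destruct b, (odd (size s)).
Qed.

Lemma addvv (v : V) : v + v = 0.
Proof.
rewrite -{1 2}[v]scale1r -scalerDl (_ : 1 + 1 = 0) ?scale0r //.
by apply/eqP.
Qed.

Lemma oppv (v : V) : - v = v.
Proof. by apply/eqP; rewrite eq_sym -subr_eq0 opprK addvv. Qed.

Lemma mem_gaadd (a b : grpalg V) w :
  (w \in gaadd a b) = (w \in a) (+) (w \in b).
Proof.
by rewrite /gaadd in_fsetU !in_fsetD; case: (w \in a); case: (w \in b).
Qed.

Lemma mem_pf1 (v w : V) : (w \in pf1 v) = (w == 0) (+) (w == v).
Proof. by rewrite /pf1 mem_gaadd /ga1 /gaX !in_fset1. Qed.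

Lemma mem_gasum (s : seq (grpalg V)) w :
  (w \in gasum s) = \big[addb/false]_(t <- s) (w \in t).
Proof.
elim: s => [|t s IH]; first by rewrite big_nil.
by rewrite big_cons /= mem_gaadd IH.
Qed.

Lemma mem_gamul (a b : grpalg V) w :
  (w \in gamul a b) = \big[addb/false]_(x <- a) ((w - x) \in b).
Proof.
rewrite /gamul in_fset /= inE /=.
have -> : #|` [fset u | u in a & w - u \in b]| = count (fun u => w - u \in b) a.
  rewrite -size_filter; apply: perm_size; apply: uniq_perm.
  - exact: fset_uniq.
  - exact/filter_uniq/fset_uniq.
  - by move=> x; rewrite mem_filter inE /= andbC.
rewrite xorsum_odd; case: (boolP (odd _)) => h; rewrite ?andbT ?andbF //.
have : has (fun u => w - u \in b) a by rewrite has_count; case: (count _ _) h.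
case/hasP => x xa xb.
apply/imfset2P; exists x => //; exists (w - x) => //.
by rewrite addrC subrK.
Qed.


Lemma big_pf1 (F : V -> bool) (u : V) :
  \big[addb/false]_(x <- pf1 u) F x = F 0 (+) F u.
Proof.
case: (eqVneq u 0) => [->|nu].
  have -> : pf1 0 = fset0 :> {fset V}.
    by apply/fsetP => w; rewrite mem_pf1 addbb in_fset0.
  by rewrite big_seq_fset0 addbb.
rewrite (perm_big [:: 0; u]) /=.
  by rewrite !big_cons big_nil addbF.
apply: uniq_perm.
- exact: fset_uniq.
- by rewrite /= inE andbT eq_sym.
move=> w; rewrite mem_pf1 !inE.
case: (eqVneq w 0) => [->|nw] /=; first by rewrite eq_sym (negbTE nu).
by [].
Qed.

Lemma mem_pf2 (u v w : V) :
  (w \in pf2 u v) = (w \in pf1 u) (+) (w \in pf1 v) (+) (w \in pf1 (u + v)).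
Proof.
rewrite /pf2 mem_gamul big_pf1 !mem_pf1 subr0 subr_eq0 subr_eq (addrC v u).
by case: (w == 0); case: (w == u); case: (w == v); case: (w == u + v).
Qed.

Fixpoint tel (acc : V) (r : seq V) : seq (V * V) :=
  match r with [::] => [::] | v :: r' => (acc, v) :: tel (acc + v) r' end.

Lemma tel_size acc r : size (tel acc r) = size r.
Proof. by elim: r acc => [|v r IH] acc //=; rewrite IH. Qed.

Lemma tel_mem acc r w :
  \big[addb/false]_(p <- tel acc r) (w \in pf2 p.1 p.2) =
  (w \in pf1 acc) (+) \big[addb/false]_(v <- r) (w \in pf1 v)
    (+) (w \in pf1 (acc + \sum_(v <- r) v)).
Proof.
elim: r acc => [|v r IH] acc /=.
  by rewrite !big_nil addr0 addbF addbb.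
rewrite !big_cons IH mem_pf2 /= addrA.
move: (w \in pf1 acc) (w \in pf1 v) (w \in pf1 (acc + v))
  (w \in pf1 (acc + v + \sum_(v <- r) v)) (\big[addb/false]_(v <- r) (w \in pf1 v)).
by do 5 case.
Qed.

Lemma key (L : seq V) :
  (2 <= size L)%N -> \sum_(v <- L) v = 0 ->
  exists uv : seq (V * V), size uv = (size L - 2)%N /\
    forall w, \big[addb/false]_(p <- uv) (w \in pf2 p.1 p.2) =
              \big[addb/false]_(v <- L) (w \in pf1 v).
Proof.
case: L => [|a [|b r]] //= _ Hs.
case/lastP E: (b :: r) => [|m z] //.
have Hm : size m = size r.
  by have := congr1 size E; rewrite size_rcons /= => -[].
exists (tel a m); split; first by rewrite tel_size Hm subn2.
move=> w; rewrite tel_mem.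
rewrite E big_cons big_rcons /= in Hs.
have Hz : a + \sum_(v <- m) v = z.
  by move/eqP: Hs; rewrite addrA addr_eq0 oppv => /eqP.
by rewrite Hz big_cons big_rcons /= addbA.
Qed.


Lemma eps0_odd (xi : grpalg V) : eps0 xi = (odd #|` xi|)%:R.
Proof.
rewrite /eps0; elim: (enum_fset xi) => [|x s IH]; first by rewrite big_nil.
rewrite big_cons IH /=; case: (odd (size s)) => /=.
  by apply/eqP.
by rewrite addr0.
Qed.

Lemma even_I (xi : grpalg V) : in_I xi -> ~~ odd #|` xi|.
Proof.
rewrite /in_I eps0_odd; case: (odd _) => //= h.
Qed.

Lemma sum_filter (xi : grpalg V) w : ~~ odd #|` xi| ->
  \big[addb/false]_(v <- [seq v <- enum_fset xi | v != 0]) (w \in pf1 v) = (w \in xi).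
Proof.
move=> he; rewrite big_filter big_mkcond /=.
rewrite (eq_bigr (fun v => (w == 0) (+) (v == w))); last first.
  move=> v _; rewrite mem_pf1 (eq_sym w v).
  by case: (eqVneq v 0) => [->|] //=; rewrite eq_sym addbb.
rewrite big_split /= xorsum_const (negbTE he) /= xorsum_odd.
by rewrite (count_uniq_mem w (fset_uniq xi)); case: (w \in xi).
Qed.

Lemma sum1_filter (xi : grpalg V) :
  \sum_(v <- [seq v <- enum_fset xi | v != 0]) v = eps1 xi.
Proof.
rewrite big_filter big_mkcond /eps1; apply: eq_bigr => v _.
by case: (eqVneq v 0).
Qed.

Lemma size_filter0 (xi : grpalg V) :
  (size [seq v <- enum_fset xi | v != 0%R] + (0%R \in xi))%N = #|` xi|.
Proof.
rewrite size_filter -(count_uniq_mem 0%R (fset_uniq xi)) addnC.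
rewrite -(count_predC (pred1 0%R)); congr (_ + _)%N.
Qed.

End Aux.

Theorem lemma1p1 (V : lmodType 'F_2) (xi : grpalg V) :
  xi <> ga0 V ->
  (in_I xi ->
     (2 <= #|` supp xi|)%N /\
     (exists vs : seq V,
        xi = gasum [seq pf1 v | v <- vs] /\ (size vs <= #|` supp xi|)%N) /\
     (0%R \in supp xi ->
        exists vs : seq V,
          xi = gasum [seq pf1 v | v <- vs] /\ (size vs <= #|` supp xi| - 1)%N))
  /\
  (in_I xi -> eps1 xi = 0%R ->
     (4 <= #|` supp xi|)%N /\
     (exists uv : seq (V * V),
        xi = gasum [seq pf2 p.1 p.2 | p <- uv] /\ (size uv <= #|` supp xi| - 2)%N) /\
     (0%R \in supp xi ->
        exists uv : seq (V * V),
          xi = gasum [seq pf2 p.1 p.2 | p <- uv] /\ (size uv <= #|` supp xi| - 3)%N)).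
Proof.
rewrite /supp => xi0.
set L := [seq v <- enum_fset xi | v != 0%R].
have Hsz := size_filter0 V xi; rewrite -/L in Hsz.
have Hge : (#|` xi| <= size L + 1)%N by rewrite -Hsz leq_add2l leq_b1.
have Hle : (size L <= #|` xi|)%N by rewrite -Hsz leq_addr.
have Hz : (0%R \in xi) -> (size L = #|` xi| - 1)%N.
  by move=> h0; rewrite -Hsz h0 addn1 subn1.
have d2 : in_I xi -> (2 <= #|` xi|)%N.
  move=> /even_I he.
  have : (0 < #|` xi|)%N by rewrite cardfs_gt0; apply/eqP.
  by case: #|` xi| he => [|[|n]].
have Eq1 : in_I xi -> xi = gasum [seq pf1 v | v <- L].
  move=> /even_I he; apply/fsetP => w.
  by rewrite mem_gasum big_map sum_filter.
split.
  move=> hI; split; first exact: d2.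
  split.
    by exists L; split; [exact: Eq1 | exact: Hle].
  by move=> h0; exists L; split; [exact: Eq1 | rewrite (Hz h0)].
move=> hI he1.
have d4 : (4 <= #|` xi|)%N.
  have := d2 hI; have := even_I V xi hI; have := fset_uniq xi.
  move: he1; rewrite /eps1.
  case: (enum_fset xi) => [|a [|b [|c r]]] //=.
  rewrite big_cons big_cons big_nil addr0 => /eqP.
  rewrite addr_eq0 oppv => /eqP -> /=; rewrite inE eqxx //.
  by case: (size r) => [|[|n]].
have HL2 : (2 <= size L)%N.
  have := leq_sub2r 1 Hge; rewrite addnK; apply: leq_trans.
  by rewrite leq_subRL ?(leq_trans _ d4).
have [uv [Huv Hid]] := key V L HL2 (etrans (sum1_filter V xi) he1).
have Eq2 : xi = gasum [seq pf2 p.1 p.2 | p <- uv].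
  apply/fsetP => w.
  by rewrite mem_gasum big_map Hid sum_filter //; exact: (even_I V xi).
split; first exact: d4.
split. exists uv; split; first exact: Eq2. rewrite Huv. apply: leq_sub2r. exact: Hle.
move=> h0; exists uv; split; first exact: Eq2.
by rewrite Huv (Hz h0) -subnDA.
Qed.
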